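(* (a) Let $\langle A,\le\rangle$ be a poset with a partition pair $\langle\otimes,\odot\rangle$. Let $I\subseteq A$ be a set of representatives of the classes of $\equiv_\odot$ (equivalently $\equiv_\otimes$), made into a join-semilattice by letting $p\vee q$ be the representative of the class of $p\odot q$, let $A_p$ be the class of $p$ with the restricted order $\le_p$, and for $p\preceq_\odot q$ in $I$ define $\psi_{pq}(a):=a\otimes q$, $\varphi_{pq}(a):=a\odot q$ ($a\in A_p$). Then these maps are well-defined monotone maps $A_p\to A_q$ forming a directed system (identities at $p=q$, closed under composition) which satisfies conditions (S1) and (S2) below, and for $a\in A_p$, $b\in A_q$, $s=p\vee q$: $a\le b$ iff $\varphi_{ps}(a)\le_s\psi_{qs}(b)$. (b) Conversely, let $\mathbf I$ be a join-semilattice, $\langle A_p,\le_p\rangle$ ($p\in I$) pairwise disjoint posets and $\psi_{pq},\varphi_{pq}:A_p\to A_q$ ($p\preceq q$) monotone maps with $\varphi_{pp}=\psi_{pp}=\mathrm{id}$, $\varphi_{qr}\varphi_{pq}=\varphi_{pr}$, $\psi_{qr}\psi_{pq}=\psi_{pr}$, satisfying (S1) and (S2); let $\le$ on $A=\biguplus A_p$ be defined by $a\le b$ iff $\varphi_{ps}(a)\le_s\psi_{qs}(b)$ ($a\in A_p$, $b\in A_q$, $s=p\vee q$). Then $a\otimes b:=\psi_{ps}(a)$ and $a\odot b:=\varphi_{ps}(a)$ define a partition pair on $\langle A,\le\rangle$ whose induced maps as in (a) are the given $\psi_{pq},\varphi_{pq}$. Here (S1): if $p\prec q$, $p\prec r$,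 $t=q\vee r$, then $\varphi_{qt}(\psi_{pq}(a))\le_t\psi_{rt}(\varphi_{pr}(a))$ for all $a\in A_p$; (S2): if $p\prec q$, $a,b\in A_p$ and $\varphi_{pq}(a)\le_q\psi_{pq}(b)$, then $a<_pb$.
   Context: A left normal band on a set $A$ is a binary operation $\odot$ with $a\odot a=a$, $a\odot(b\odot c)=(a\odot b)\odot c$, $a\odot(b\odot c)=a\odot(c\odot b)$ for all $a,b,c$. Put $a\preceq_\odot b\iff b\odot a=b$, and $a\equiv_\odot b$ iff $a\preceq_\odot b$ and $b\preceq_\odot a$; the quotient by $\equiv_\odot$ is a join-semilattice under the induced operation. Two left normal bands are homotactic if they induce the same preorder $\preceq$. A partition pair for a poset $\langle A,\le\rangle$ is a pair $\langle\otimes,\odot\rangle$ of homotactic left normal bands on $A$ such that (PS1) if $a\le b$ then $a\otimes c\le b\otimes c$ and $a\odot c\le b\odot c$ for all $c$; (PS2) if $a\odot b\le b\otimes a$ then $a\le b$. *)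

(* Defs.v *)
From HB Require Import structures.
From mathcomp Require Import all_boot all_order.
Set Implicit Arguments. Unset Strict Implicit. Unset Printing Implicit Defensive.
Import Order.Theory.
Local Open Scope order_scope.

Definition is_poset (T : Type) (le : T -> T -> Prop) : Prop :=
  (forall a, le a a) /\
  (forall a b, le a b -> le b a -> a = b) /\
  (forall a b c, le a b -> le b c -> le a c).

Definition left_normal_band (T : Type) (op : T -> T -> T) : Prop :=
  (forall a, op a a = a) /\
  (forall a b c, op a (op b c) = op (op a b) c) /\
  (forall a b c, op a (op b c) = op a (op c b)).

Definition band_le (T : Type) (op : T -> T -> T) (a b : T) : Prop := op b a = b.

Definition band_eq (T : Type) (op : T -> T -> T) (a b : T) : Prop :=
  band_le op a b /\ band_le op b a.

Definition homotactic (T : Type) (o1 o2 : T -> T -> T) : Prop :=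
  forall a b, band_le o1 a b <-> band_le o2 a b.

Definition partition_pair (T : Type) (le : T -> T -> Prop)
    (otimes odot : T -> T -> T) : Prop :=
  left_normal_band otimes /\ left_normal_band odot /\ homotactic otimes odot /\
  (forall a b c, le a b -> le (otimes a c) (otimes b c) /\ le (odot a c) (odot b c)) /\
  (forall a b, le (odot a b) (otimes b a) -> le a b).

Definition is_rep_set (T : Type) (odot : T -> T -> T) (I : T -> Prop) : Prop :=
  forall a, exists i, I i /\ band_eq odot i a /\
    (forall j, I j -> band_eq odot j a -> j = i).

(* Part (b): the disjoint union A = ⊎_p A_p is the sigma type {p : I & A p}.
   The families of maps psi, phi are given as total functions
   A p -> A q for all p q; only their values for p <= q matter. *)
Section Glue.
Context {d : Order.disp_t} {I : joinSemilatticeType d} {A : I -> Type}.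
Variables (leA : forall p, A p -> A p -> Prop)
          (psi phi : forall p q : I, A p -> A q).

Definition glue_le (x y : {p : I & A p}) : Prop :=
  leA (phi (projT1 x `|` projT1 y) (projT2 x))
      (psi (projT1 x `|` projT1 y) (projT2 y)).

Definition glue_otimes (x y : {p : I & A p}) : {p : I & A p} :=
  existT A (projT1 x `|` projT1 y) (psi (projT1 x `|` projT1 y) (projT2 x)).

Definition glue_odot (x y : {p : I & A p}) : {p : I & A p} :=
  existT A (projT1 x `|` projT1 y) (phi (projT1 x `|` projT1 y) (projT2 x)).
End Glue.

(* Main.v *)
Require Import Defs.
From HB Require Import structures.
From mathcomp Require Import all_boot all_order.
Import Order.Theory.
Local Open Scope order_scope.


Lemma bl_refl {T : Type} {op : T -> T -> T} : left_normal_band op ->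
  forall a, band_le op a a.
Proof. by case=> id _ a; rewrite /band_le id. Qed.

Lemma bl_trans {T : Type} {op : T -> T -> T} : left_normal_band op ->
  forall a b c, band_le op a b -> band_le op b c -> band_le op a c.
Proof.
case=> id [A N] a b c; rewrite /band_le => ab bc.
by rewrite -{1}bc -A ab bc.
Qed.

Lemma bl_l {T : Type} {op : T -> T -> T} : left_normal_band op ->
  forall a b, band_le op a (op a b).
Proof. case=> id [A N] a b; rewrite /band_le. by rewrite -A N A id. Qed.

Lemma bl_r {T : Type} {op : T -> T -> T} : left_normal_band op ->
  forall a b, band_le op b (op a b).
Proof. case=> id [A N] a b; rewrite /band_le. by rewrite -A id. Qed.

Lemma bl_join {T : Type} {op : T -> T -> T} : left_normal_band op ->
  forall a b c, band_le op a c -> band_le op b c -> band_le op (op a b) c.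
Proof. case=> id [A N] a b c; rewrite /band_le => ac bc. by rewrite A ac bc. Qed.

Lemma leUl_t {d : Order.disp_t} {L : joinSemilatticeType d} (x y z : L) :
  x <= y -> x <= y `|` z.
Proof. move=> h; exact: le_trans h (leUl _ _). Qed.
Lemma leUr_t {d : Order.disp_t} {L : joinSemilatticeType d} (x y z : L) :
  x <= z -> x <= y `|` z.
Proof. move=> h; exact: le_trans h (leUr _ _). Qed.

Ltac solve_le :=
  match goal with
  | |- is_true (_ `|` _ <= _) => rewrite leUx; apply/andP; split; solve_le
  | |- is_true (?x <= ?x) => exact: lexx
  | |- is_true (_ <= _ `|` _) =>
      first [ apply: leUl_t; solve_le | apply: leUr_t; solve_le ]
  | _ => assumption
  end.

Ltac solve_eq := apply: le_anti; apply/andP; split; solve_le.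

Theorem theorem5p2 :
  (* (a) *)
  (forall (T : Type) (le : T -> T -> Prop) (otimes odot : T -> T -> T)
          (I : T -> Prop),
     is_poset le ->
     partition_pair le otimes odot ->
     is_rep_set odot I ->
     (* psi_pq(a) := a ⊗ q and phi_pq(a) := a ⊙ q are well-defined maps A_p -> A_q *)
     (forall p q a, I p -> I q -> band_le odot p q -> band_eq odot a p ->
        band_eq odot (otimes a q) q /\ band_eq odot (odot a q) q) /\
     (* monotone w.r.t. the restricted orders *)
     (forall p q a b, I p -> I q -> band_le odot p q ->
        band_eq odot a p -> band_eq odot b p -> le a b ->
        le (otimes a q) (otimes b q) /\ le (odot a q) (odot b q)) /\
     (* identities at p = q *)
     (forall p a, I p -> band_eq odot a p -> otimes a p = a /\ odot a p = a) /\
     (* closed under composition *)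
     (forall p q r a, I p -> I q -> I r -> band_le odot p q -> band_le odot q r ->
        band_eq odot a p ->
        otimes (otimes a q) r = otimes a r /\ odot (odot a q) r = odot a r) /\
     (* (S1) ; t = q \/ r is the representative of the class of q ⊙ r *)
     (forall p q r t a, I p -> I q -> I r -> I t ->
        band_le odot p q -> p <> q -> band_le odot p r -> p <> r ->
        band_eq odot t (odot q r) -> band_eq odot a p ->
        le (odot (otimes a q) t) (otimes (odot a r) t)) /\
     (* (S2) *)
     (forall p q a b, I p -> I q -> band_le odot p q -> p <> q ->
        band_eq odot a p -> band_eq odot b p ->
        le (odot a q) (otimes b q) -> le a b /\ a <> b) /\
     (* order characterization; s = p \/ q *)
     (forall p q s a b, I p -> I q -> I s -> band_eq odot s (odot p q) ->
        band_eq odot a p -> band_eq odot b q ->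
        (le a b <-> le (odot a s) (otimes b s)))) /\
  (* (b) *)
  (forall (d : Order.disp_t) (I : joinSemilatticeType d) (A : I -> Type)
          (leA : forall p, A p -> A p -> Prop)
          (psi phi : forall p q : I, A p -> A q),
     (forall p, is_poset (leA p)) ->
     (forall (p q : I) (a b : A p), p <= q -> leA p a b ->
        leA q (psi p q a) (psi p q b) /\ leA q (phi p q a) (phi p q b)) ->
     (forall (p : I) (a : A p), psi p p a = a /\ phi p p a = a) ->
     (forall (p q r : I) (a : A p), p <= q -> q <= r ->
        psi q r (psi p q a) = psi p r a /\ phi q r (phi p q a) = phi p r a) ->
     (* (S1) *)
     (forall (p q r : I) (a : A p), p < q -> p < r ->
        leA (q `|` r) (phi q (q `|` r) (psi p q a)) (psi r (q `|` r) (phi p r a))) ->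
     (* (S2) *)
     (forall (p q : I) (a b : A p), p < q ->
        leA q (phi p q a) (psi p q b) -> leA p a b /\ a <> b) ->
     is_poset (glue_le leA psi phi) /\
     partition_pair (glue_le leA psi phi) (glue_otimes psi) (glue_odot phi) /\
     (* the classes of ≡ are the A_p, ordered as in I *)
     (forall x y : {p : I & A p},
        band_le (glue_odot phi) x y <-> projT1 x <= projT1 y) /\
     (* the induced maps are the given psi_pq, phi_pq *)
     (forall (p q : I) (a : A p) (b : A q), p <= q ->
        glue_otimes psi (existT A p a) (existT A q b) = existT A q (psi p q a) /\
        glue_odot phi (existT A p a) (existT A q b) = existT A q (phi p q a))).
Proof.
split.
- move=> T le o d I [lrefl [lanti ltrans]]
    [Ho [Hd [hom [PS1 PS2]]]] Hrep.
  have Ho' := Ho. have Hd' := Hd.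
  case: Ho' => oid [oA oN]. case: Hd' => did [dA dN].
  have dtr := bl_trans Hd. have otr := bl_trans Ho.
  have dl := bl_l Hd. have dr := bl_r Hd. have dj := bl_join Hd.
  have ol := bl_l Ho. have orr := bl_r Ho. have oj := bl_join Ho.
  have o_le a b : le (o a b) a.
    apply: PS2.
    have -> : d (o a b) a = o a b by apply/hom; exact: ol.
    by rewrite oA oid; apply: lrefl.
  have d_le a b : le a (d a b).
    apply: PS2.
    have -> : o (d a b) a = d a b by apply/hom; exact: dl.
    by rewrite dA did; apply: lrefl.
  have G x y s : band_le d x s -> band_le d y s -> band_le d s (d x y) ->
      (le x y <-> le (d x s) (o y s)).
    move=> xs ys sxy.
    have e1 : d x s = d x y.
      by rewrite -{1}ys dN dA sxy.
    have sxy' : band_le o s (o y x).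
      apply/hom; apply: (dtr _ _ _ sxy); apply: dj; apply/hom; [exact: orr | exact: ol].
    have xs' : band_le o x s by apply/hom.
    have e2 : o y s = o y x.
      by rewrite -{1}xs' oN oA sxy'.
    rewrite e1 e2; split; last exact: PS2.
    move=> H.
    have h := proj1 (PS1 x y x H). rewrite oid in h.
    have h2 := proj2 (PS1 _ _ y h).
    have e3 : d (o y x) y = o y x by apply/hom; exact: ol.
    by rewrite e3 in h2.
  split.
  { move=> p q a Ip Iq pq [ap pa].
    have aq : band_le d a q := dtr _ _ _ ap pq.
    split; split.
    - apply/hom; apply: oj; [exact/hom | exact: bl_refl].
    - apply/hom; exact: orr.
    - apply: dj; [exact: aq | exact: bl_refl].
    - exact: dr. }
  split.
  { move=> p q a b _ _ _ _ _ H; exact: PS1. }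
  split.
  { move=> p a _ [ap pa]; split; last exact: pa.
    by move/hom: pa. }
  split.
  { move=> p q r a _ _ _ pq qr _; split.
    - rewrite -oA oN. by move/hom: qr => ->.
    - rewrite -dA dN. by rewrite qr. }
  split.
  { move=> p q r t a _ _ _ _ pq _ pr _ [tqr qrt] [ap pa].
    have aq : band_le d a q := dtr _ _ _ ap pq.
    have ar : band_le d a r := dtr _ _ _ ap pr.
    have oaqq : band_le d (o a q) q.
      apply/hom; apply: oj; [exact/hom | exact: bl_refl].
    have qoaq : band_le d q (o a q) by apply/hom; exact: orr.
    have darr : band_le d (d a r) r by apply: dj; [exact: ar | exact: bl_refl].
    have rdar : band_le d r (d a r) by exact: dr.
    have h1 : band_le d (o a q) t.
      apply: (dtr _ _ _ oaqq); exact: (dtr _ _ _ (dl q r) qrt).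
    have h2 : band_le d (d a r) t.
      apply: (dtr _ _ _ darr); exact: (dtr _ _ _ (dr q r) qrt).
    have h3 : band_le d t (d (o a q) (d a r)).
      apply: (dtr _ _ _ tqr); apply: dj.
      + apply: (dtr _ _ _ qoaq); exact: dl.
      + apply: (dtr _ _ _ rdar); exact: dr.
    apply: (proj1 (G _ _ t h1 h2 h3)).
    exact: ltrans (o_le a q) (d_le a r). }
  split.
  { move=> p q a b Ip Iq pq npq [ap pa] [bp pb] H.
    split; first exact: ltrans (d_le a q) (ltrans _ _ _ H (o_le b q)).
    move=> e; subst b.
    have e2 : d a q = a.
      apply: lanti; last exact: d_le.
      exact: ltrans H (o_le a q).
    have qa : band_le d q a := e2.
    have qp : band_le d q p := dtr _ _ _ qa ap.
    case: (Hrep p) => i [Ii [ip uniq]].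
    apply: npq.
    have e1 := uniq p Ip (conj (bl_refl Hd p) (bl_refl Hd p)).
    have e3 := uniq q Iq (conj qp pq).
    by rewrite e1 e3. }
  { move=> p q s a b _ _ _ [spq pqs] [ap pa] [bq qb].
    have h1 : band_le d a s.
      apply: (dtr _ _ _ ap); exact: (dtr _ _ _ (dl p q) pqs).
    have h2 : band_le d b s.
      apply: (dtr _ _ _ bq); exact: (dtr _ _ _ (dr p q) pqs).
    have h3 : band_le d s (d a b).
      apply: (dtr _ _ _ spq); apply: dj.
      + apply: (dtr _ _ _ pa); exact: dl.
      + apply: (dtr _ _ _ qb); exact: dr.
    exact: (G _ _ s h1 h2 h3). }
- move=> d I A leA psi phi Hpo Hmono Hid Hcomp HS1 HS2.
  have refl p (a : A p) : leA p a a by case: (Hpo p) => h _; apply: h.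
  have antiA p (a b : A p) : leA p a b -> leA p b a -> a = b.
    by case: (Hpo p) => _ [h _]; apply: h.
  have transA p (a b c : A p) : leA p a b -> leA p b c -> leA p a c.
    by case: (Hpo p) => _ [_ h]; apply: h.
  have psi1 p (a : A p) : psi p p a = a by case: (Hid p a).
  have phi1 p (a : A p) : phi p p a = a by case: (Hid p a).
  have psiC p q r (a : A p) : p <= q -> q <= r -> psi q r (psi p q a) = psi p r a.
    by move=> h1 h2; case: (Hcomp p q r a h1 h2).
  have phiC p q r (a : A p) : p <= q -> q <= r -> phi q r (phi p q a) = phi p r a.
    by move=> h1 h2; case: (Hcomp p q r a h1 h2).
  have psiphi p q (a : A p) : p <= q -> leA q (psi p q a) (phi p q a).
    move=> pq; have := pq; rewrite le_eqVlt => /orP [/eqP e|lt].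
    + subst q; rewrite psi1 phi1; exact: refl.
    + have := HS1 p q q a lt lt. rewrite joinxx. by rewrite psi1 phi1.
  have S1' p q r (a : A p) : p <= q -> p <= r ->
      leA (q `|` r) (phi q (q `|` r) (psi p q a)) (psi r (q `|` r) (phi p r a)).
    move=> pq pr.
    have := pq; rewrite le_eqVlt => /orP [/eqP e|ltq].
    + subst q; rewrite psi1 (join_r pr) psi1; exact: refl.
    have := pr; rewrite le_eqVlt => /orP [/eqP e|ltr].
    + subst r; rewrite phi1 (join_l pq) phi1; exact: refl.
    exact: HS1.
  have pull v u (x y : A v) : v <= u -> leA u (phi v u x) (psi v u y) -> leA v x y.
    move=> vu; have := vu; rewrite le_eqVlt => /orP [/eqP e|lt].
    + by subst u; rewrite phi1 psi1.
    + by move/(HS2 _ _ _ _ lt) => [].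
  have anti_core p q s (a : A p) (b : A q) : p <= s -> q <= s ->
      leA s (phi p s a) (psi q s b) -> leA s (phi q s b) (psi p s a) ->
      existT A p a = existT A q b.
    move=> ps qs H1 H2.
    have := ps; rewrite le_eqVlt => /orP [/eqP e1|lt1].
    - have := qs; rewrite le_eqVlt => /orP [/eqP e2|lt2].
      + subst s; subst q. rewrite !phi1 !psi1 in H1 H2.
        by rewrite (antiA _ _ _ H1 H2).
      + exfalso.
        have := HS2 _ _ b b lt2 (transA _ _ _ _ H2 (transA _ _ _ _ (psiphi _ _ a ps) H1)).
        by case.
    - exfalso.
      have := HS2 _ _ a a lt1 (transA _ _ _ _ H1 (transA _ _ _ _ (psiphi _ _ b qs) H2)).
      by case.
  have trans_core p q r (a : A p) (b : A q) (c : A r) :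
      leA (p `|` q) (phi p (p `|` q) a) (psi q (p `|` q) b) ->
      leA (q `|` r) (phi q (q `|` r) b) (psi r (q `|` r) c) ->
      leA (p `|` r) (phi p (p `|` r) a) (psi r (p `|` r) c).
    move=> H1 H2.
    have h1 := proj2 (Hmono _ ((p `|` q) `|` (q `|` r)) _ _ (leUl _ _) H1).
    rewrite phiC in h1; try solve_le.
    have h2 := S1' q (p `|` q) (q `|` r) b (leUr _ _) (leUl _ _).
    have h3 := proj1 (Hmono _ ((p `|` q) `|` (q `|` r)) _ _ (leUr _ _) H2).
    rewrite psiC in h3; try solve_le.
    have hh := transA _ _ _ _ h1 (transA _ _ _ _ h2 h3).
    apply: (pull _ ((p `|` q) `|` (q `|` r))); first solve_le.
    by rewrite phiC ?psiC; try solve_le.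
  have exeq (f : forall p q, A p -> A q) p (a : A p) s1 s2 :
      s1 = s2 -> existT A s1 (f p s1 a) = existT A s2 (f p s2 a).
    by move=> ->.
  have bchar (f : forall p q, A p -> A q) : (forall p a, f p p a = a) ->
      forall x y : {p : I & A p},
      existT A (projT1 y `|` projT1 x) (f _ _ (projT2 y)) = y <-> projT1 x <= projT1 y.
    move=> fid [p a] [q b] /=; split.
    + move/(congr1 (@projT1 _ _)) => /= e. rewrite -e; exact: leUr.
    + move=> pq. rewrite (join_l pq). by rewrite fid.
  have lnb (f : forall p q, A p -> A q) : (forall p a, f p p a = a) ->
      (forall p q r (a : A p), p <= q -> q <= r -> f q r (f p q a) = f p r a) ->
      left_normal_band (fun x y : {p : I & A p} =>
        existT A (projT1 x `|` projT1 y) (f _ (projT1 x `|` projT1 y) (projT2 x))).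
    move=> fid fC; split; [|split].
    + case=> p a /=. rewrite joinxx. by rewrite fid.
    + case=> p a [q b] [r c] /=. rewrite fC; try solve_le.
      apply: exeq; exact: joinA.
    + case=> p a [q b] [r c] /=. apply: exeq. by rewrite [q `|` r]joinC.
  split.
  { split; [|split].
    - case=> p a; rewrite /glue_le /=. rewrite joinxx phi1 psi1; exact: refl.
    - case=> p a [q b]; rewrite /glue_le /= => H1 H2.
      rewrite [q `|` p]joinC in H2.
      exact: (anti_core p q (p `|` q) a b (leUl _ _) (leUr _ _) H1 H2).
    - case=> p a [q b] [r c]; rewrite /glue_le /=. exact: trans_core. }
  split.
  { split; first exact: (lnb psi psi1 psiC).
    split; first exact: (lnb phi phi1 phiC).
    split.
    { move=> x y; rewrite /band_le.
      have h1 := bchar psi psi1 x y. have h2 := bchar phi phi1 x y.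
      split => H.
      - apply (proj2 h2); apply (proj1 h1); exact H.
      - apply (proj2 h1); apply (proj1 h2); exact H. }
    split.
    { case=> p a [q b] [r c]; rewrite /glue_le /= => H; split.
      - rewrite psiC; try solve_le.
        have ps1o w : w = (p `|` r) `|` (p `|` q) ->
          leA w (phi (p `|` r) w (psi p (p `|` r) a)) (psi q w b).
          move=> ->.
          have h1 := S1' p (p `|` r) (p `|` q) a (leUl _ _) (leUl _ _).
          have h2 := proj1 (Hmono _ ((p `|` r) `|` (p `|` q)) _ _ (leUr _ _) H).
          rewrite psiC in h2; try solve_le.
          exact: transA _ _ _ _ h1 h2.
        apply: ps1o; solve_eq.
      - rewrite phiC; try solve_le.
        have ps1d w : w = (p `|` q) `|` (q `|` r) ->
          leA w (phi p w a) (psi (q `|` r) w (phi q (q `|` r) b)).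
          move=> ->.
          have h1 := proj2 (Hmono (p `|` q) ((p `|` q) `|` (q `|` r)) _ _ (leUl _ _) H).
          rewrite phiC in h1; try solve_le.
          have h2 := S1' q (p `|` q) (q `|` r) b (leUr _ _) (leUl _ _).
          exact: transA _ _ _ _ h1 h2.
        apply: ps1d; solve_eq. }
    { case=> p a [q b]; rewrite /glue_le /= => H.
      rewrite phiC ?psiC in H; try solve_le.
      apply: (pull _ ((p `|` q) `|` (q `|` p))); first solve_le.
      by rewrite phiC ?psiC; try solve_le. } }
  split.
  { move=> x y; rewrite /band_le. exact: (bchar phi phi1 x y). }
  { move=> p q a b pq; rewrite /glue_otimes /glue_odot /=; split; apply: exeq; exact: join_r. }
Qed.
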